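(* Let $\mathcal C$ be a $\Delta$-complex labeled over $B(X,P)$, let $C$ be a $k$-cell of $\mathcal C$ with $k\ge2$ and characteristic map $\sigma\colon\Delta^k\to\mathcal C$. Let $q$ be any closed path in the $1$-skeleton of $\Delta^k$ based at $v_0$ (a sequence of edges of $\Delta^k$, each traversed in either direction), and let $p=\sigma(q)$ be its image, a path of $1$-cells and inverses of $1$-cells in $\mathcal C$. Then $\ell(C)\le\ell(p)$ in $M(X,P)$ with respect to the natural partial order.
   Context: A $\Delta$-complex is a CW-complex in which each $k$-cell $c$ has a distinguished characteristic map $\sigma_c\colon\Delta^k\to\mathcal C$, $\Delta^k=[v_0,\dots,v_k]$ the standard simplex with ordered vertices, such that the restriction of $\sigma_c$ to each $(k-1)$-face (identified order-preservingly with $\Delta^{k-1}$) is the distinguished characteristic map of a $(k-1)$-cell; each edge $[v_i,v_j]$, $i<j$, is directed from $v_i$ to $v_j$, and a $1$-cell $e$ is directed from $\sigma_e(v_0)$ to $\sigma_e(v_1)$; traversing it backwards is written $e^{-1}$. An immersion is a continuous map that is a local homeomorphism onto its image and commutes with characteristic maps (each $k$-cell $d$ maps onto a $k$-cell with $f\circ\sigma_d=\sigma_{f(d)}$). $B(X,P)$ is a $\Delta$-complex with one $0$-cell, $1$-cells indexed by $X$, $k$-cells ($2\le k\le n$) indexed by $P_k$, index sets pairwise disjoint, $P=\bigcup P_k$. $\mathcal C$ is labeled over $B(X,P)$ via an immersion $f_{\mathcal C}\colon\mathcal C\to B(X,P)$; $\ell(c)$ is the index of $f_{\mathcal C}(c)$,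 $\ell(e^{-1})=\ell(e)^{-1}$, and the label of a path is the concatenation of labels, read in $M(X,P)$. Boundary labels: for a $k$-cell $c$ ($k\ge2$) with characteristic map $\sigma$, let $c_i$ be the $(k-1)$-cell whose characteristic map is $\sigma$ restricted to the face omitting $v_i$, and $e(c)=\sigma([v_0,v_1])$; $bl(c)=\ell(\sigma[v_0,v_1])\ell(\sigma[v_1,v_2])\ell(\sigma[v_0,v_2])^{-1}$ if $k=2$, and $bl(c)=\ell(c_k)\cdots\ell(c_1)\ell(e(c))\ell(c_0)\ell(e(c))^{-1}$ if $k\ge3$; $bl(\rho)$ for $\rho\in P$ is the boundary label of the cell of $B(X,P)$ labeled $\rho$. $M(X,P)$ is the inverse monoid presented by generators $X\cup P$ and relations $\rho^2=\rho$ and $\rho=\rho\,bl(\rho)$ for all $\rho\in P$. The natural partial order on an inverse monoid: $a\le b$ iff $a=eb$ for some idempotent $e$. *)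

(* Defs.v *)
From mathcomp Require Import all_boot.
Set Implicit Arguments. Unset Strict Implicit. Unset Printing Implicit Defensive.

(** Delta-complexes, combinatorially: semi-simplicial sets.
    [cell S k] = the k-cells; [face S k i c] = c_i, the (k)-cell whose
    characteristic map is that of the (k+1)-cell c restricted to the face
    omitting v_i (identified order-preservingly).  The simplicial identities
    d_i d_j = d_{j-1} d_i (i < j) express that these restrictions are
    coherent.  (Only indices i <= k+1 are meaningful.) *)
Record ssset := SSSet {
  cell : nat -> Type;
  face : forall k : nat, nat -> cell k.+1 -> cell k;
  face_face : forall (k : nat) (c : cell k.+2) (i j : nat), i < j -> j <= k.+2 ->
     @face k i (@face k.+1 j c) = @face k j.-1 (@face k.+1 i c)
}.
Arguments face s k _ _ : clear implicits.

(** vertex sigma(v_i) of a k-cell *)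
Fixpoint vtx (S : ssset) (k : nat) : cell S k -> nat -> cell S 0 :=
  match k return cell S k -> nat -> cell S 0 with
  | 0 => fun c _ => c
  | k'.+1 => fun c i =>
      if i < k'.+1 then vtx (face S k' k'.+1 c) i
      else vtx (face S k' 0 c) i.-1
  end.

(** [edge S k c i j] (for i < j <= k+1) = sigma([v_i, v_j]), the 1-cell obtained
    by restricting the characteristic map of the (k+1)-cell c to the edge
    [v_i, v_j]. *)
Fixpoint edge (S : ssset) (k : nat) : cell S k.+1 -> nat -> nat -> cell S 1 :=
  match k return cell S k.+1 -> nat -> nat -> cell S 1 with
  | 0 => fun c _ _ => c
  | k'.+1 => fun c i j =>
      if j < k'.+2 then edge (face S k'.+1 k'.+2 c) i j
      else if 0 < i then edge (face S k'.+1 0 c) i.-1 j.-1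
      else edge (face S k'.+1 1 c) 0 j.-1
  end.

Record ssmap (C B : ssset) := SSMap {
  smap : forall k : nat, cell C k -> cell B k;
  smap_face : forall (k : nat) (c : cell C k.+1) (i : nat), i <= k.+1 ->
     smap (face C k i c) = face B k i (smap c)
}.

Definition immersion (C B : ssset) (f : ssmap C B) : Prop :=
  forall (k : nat) (c c' : cell C k) (i : nat), i <= k ->
    vtx c i = vtx c' i -> smap f c = smap f c' -> c = c'.

(** Generators X u P of M(X,P): the cells of B(X,P) of dimension >= 1.
    [Gen 0 x] : x in X ; [Gen k.+1 rho] : rho in P_{k+2}. *)
Inductive gen (B : ssset) : Type := Gen (k : nat) (c : cell B k.+1).
Arguments Gen {B} k c.

(** words over generators and formal inverses ([true] = inverted) *)
Definition word (B : ssset) := seq (gen B * bool).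

Definition winv (B : ssset) (w : word B) : word B :=
  rev (map (fun x => (x.1, ~~ x.2)) w).

Definition bl (B : ssset) (k : nat) : cell B k.+1 -> word B :=
  match k return cell B k.+1 -> word B with
  | 0 => fun _ => [::]
  | 1 => fun c =>
      [:: (Gen 0 (edge c 0 1), false); (Gen 0 (edge c 1 2), false);
          (Gen 0 (edge c 0 2), true)]
  | k'.+2 => fun c =>
      [seq (Gen k'.+1 (face B k'.+2 i c), false) | i <- rev (iota 1 k'.+3)]
      ++ [:: (Gen 0 (edge c 0 1), false); (Gen k'.+1 (face B k'.+2 0 c), false);
             (Gen 0 (edge c 0 1), true)]
  end.

(** The congruence on words presenting the inverse monoid M(X,P):
    the Wagner congruence (inverse monoid axioms) together with the
    relations rho^2 = rho and rho = rho bl(rho) for rho in P. *)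
Inductive Meq (B : ssset) : word B -> word B -> Prop :=
| Meq_refl w : Meq w w
| Meq_sym u v : Meq u v -> Meq v u
| Meq_trans u v w : Meq u v -> Meq v w -> Meq u w
| Meq_cat u u' v v' : Meq u u' -> Meq v v' -> Meq (u ++ v) (u' ++ v')
| Meq_inv1 w : Meq (w ++ winv w ++ w) w
| Meq_inv2 u v : Meq (u ++ winv u ++ v ++ winv v) (v ++ winv v ++ u ++ winv u)
| Meq_idem k (c : cell B k.+2) :
    Meq [:: (Gen k.+1 c, false); (Gen k.+1 c, false)] [:: (Gen k.+1 c, false)]
| Meq_bl k (c : cell B k.+2) :
    Meq [:: (Gen k.+1 c, false)] ((Gen k.+1 c, false) :: bl c).

Definition leM (B : ssset) (u v : word B) : Prop :=
  exists e : word B, Meq (e ++ e) e /\ Meq u (e ++ v).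

(** closed path in the 1-skeleton of Delta^d based at v_0, given by its
    successive vertices after v_0 (consecutive vertices distinct). *)
Definition closed_path (d : nat) (q : seq nat) : bool :=
  path (fun a b => (a != b) && (b <= d)) 0 q && (last 0 q == 0).

Definition step_word (C B : ssset) (f : ssmap C B) (k : nat) (c : cell C k.+1)
  (a b : nat) : word B :=
  if a < b then [:: (Gen 0 (smap f (edge c a b)), false)]
  else [:: (Gen 0 (smap f (edge c b a)), true)].

Definition path_word (C B : ssset) (f : ssmap C B) (k : nat) (c : cell C k.+1)
  (q : seq nat) : word B :=
  flatten (pairmap (step_word f c) 0 q).

Definition cell_word (C B : ssset) (f : ssmap C B) (k : nat) (c : cell C k.+2)
  : word B := [:: (Gen k.+1 (smap f c), false)].

(* Main.v *)
Require Import Defs.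
From mathcomp Require Import all_boot zify.
From Stdlib Require Import Setoid Morphisms.
Set Implicit Arguments. Unset Strict Implicit.

Lemma unbumpE h x : unbump h x = if h < x then x.-1 else x.
Proof. rewrite /unbump; case: (h < x) => /=; [exact: subn1 | exact: subn0]. Qed.

Ltac arith := rewrite ?unbumpE; repeat match goal with
  |- context [if ?b then _ else _] =>
     lazymatch b with context [if _ then _ else _] => fail | _ => case: (boolP b) => ? end
  end; lia.

Section Comb.
Variable S : ssset.

Lemma edgeS k (c : cell S k.+2) A B : edge c A B =
  if B < k.+2 then edge (face S k.+1 k.+2 c) A B
  else if 0 < A then edge (face S k.+1 0 c) A.-1 B.-1
  else edge (face S k.+1 1 c) 0 B.-1.
Proof. by []. Qed.


Lemma E0 k (c : cell S k.+2) A B : A < B -> B <= k.+2 ->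
  exists X, [/\ X <= k.+2, X != A, X != B &
    edge c A B = edge (face S k.+1 X c) (unbump X A) (unbump X B)].
Proof.
move=> hAB hB; rewrite edgeS.
case: ifP => h1.
  exists k.+2; split; try lia.
  by congr edge; arith.
case: ifP => h2.
  exists 0; split; try lia.
  by congr edge; arith.
exists 1; split; try lia.
congr edge; arith.
Qed.

Lemma EF k : forall (c : cell S k.+2) j A B, A < B -> B <= k.+2 -> j <= k.+2 ->
  j != A -> j != B ->
  edge c A B = edge (face S k.+1 j c) (unbump j A) (unbump j B).
Proof.
elim: k => [|k0 IH] c j A B hAB hB hj hjA hjB.
  have [X [hX hXA hXB ->]] := E0 c hAB hB.
  have -> : X = j by lia.
  by [].
have [X [hX hXA hXB ->]] := E0 c hAB hB.
have key : forall Y Z, Y < Z -> Z <= k0.+3 -> Y != A -> Y != B -> Z != A -> Z != B ->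
  edge (face S k0.+2 Y c) (unbump Y A) (unbump Y B) =
  edge (face S k0.+2 Z c) (unbump Z A) (unbump Z B).
  move=> Y Z hYZ hZ hYA hYB hZA hZB.
  rewrite (IH (face S k0.+2 Z c) Y); try arith.
  rewrite (IH (face S k0.+2 Y c) Z.-1); try arith.
  rewrite (face_face c hYZ hZ).
  congr edge; arith.
case: (ltngtP X j) => h.
- exact: key.
- by symmetry; apply: key.
- by rewrite h.
Qed.
End Comb.

Lemma smap_edge (C B : ssset) (f : ssmap C B) k (c : cell C k.+1) a b :
  smap f (edge c a b) = edge (smap f c) a b.
Proof.
elim: k c a b => [|k IH] c a b //.
rewrite !edgeS; case: ifP => _; first by rewrite IH smap_face.
by case: ifP => _; rewrite IH smap_face.
Qed.


Section Alg.
Variable B : ssset.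
Notation W := (word B).

Lemma winv_cat (u v : W) : winv (u ++ v) = winv v ++ winv u.
Proof. by rewrite /winv map_cat rev_cat. Qed.
Lemma winvK (u : W) : winv (winv u) = u.
Proof.
rewrite /winv map_rev revK -map_comp -[RHS]map_id; apply: eq_map => -[x b] /=.
by rewrite negbK.
Qed.

#[local] Instance Meq_Equiv : Equivalence (@Meq B).
Proof. split; [exact: Meq_refl | exact: Meq_sym | exact: Meq_trans]. Qed.
#[local] Instance cat_Proper : Proper (@Meq B ==> @Meq B ==> @Meq B) cat.
Proof. by move=> u u' h v v' h'; apply: Meq_cat. Qed.

Definition idem (e : W) := Meq (e ++ e) e.

Lemma F1 (w : W) : Meq (w ++ winv w ++ w) w.
Proof. exact: Meq_inv1. Qed.

Lemma comm (u v : W) : Meq (u ++ winv u ++ v ++ winv v) (v ++ winv v ++ u ++ winv u).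
Proof. exact: Meq_inv2. Qed.

Lemma idem_selfinv e : idem e -> Meq (winv e) e.
Proof.
move=> He.
have h1 : Meq (winv e) (e ++ winv e ++ winv e ++ e).
  transitivity (winv e ++ e ++ winv e).
    by symmetry; have := F1 (winv e); rewrite winvK.
  transitivity (winv e ++ (e ++ e) ++ winv e); first by rewrite He; reflexivity.
  have h := comm (winv e) e; rewrite winvK in h.
  by rewrite -catA.
symmetry; transitivity (e ++ winv e ++ e); first by symmetry; apply: F1.
rewrite {1}h1 !catA He -!catA He.
by symmetry; exact: h1.
Qed.

Lemma absorb_inv e s : idem e -> Meq e (e ++ s) -> Meq (winv e) (winv s ++ winv e).
Proof.
move=> He Hs.
have Hi := idem_selfinv He.
rewrite Hi.
set X := winv s ++ e.
have ha : Meq (e ++ X) e.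
  have h := F1 (e ++ s); rewrite winv_cat -Hs Hi -!catA He in h.
  exact: h.
have hb : Meq (X ++ e) X by rewrite /X -catA He; reflexivity.
have hwX : Meq (winv X) e by rewrite /X winv_cat winvK Hi -Hs; reflexivity.
clearbody X.
have hc : Meq (X ++ winv X) X by rewrite hwX.
have hd : Meq (e ++ winv e) e by rewrite Hi.
have he : Meq (X ++ e) (e ++ X).
  transitivity ((X ++ winv X) ++ (e ++ winv e)); first by rewrite hc hd; reflexivity.
  transitivity ((e ++ winv e) ++ (X ++ winv X)); first by rewrite -!catA; apply: comm.
  by rewrite hc hd; reflexivity.
transitivity (e ++ X); first by symmetry.
by rewrite -he hb; reflexivity.
Qed.

Lemma Meq_winv (u v : W) : Meq u v -> Meq (winv u) (winv v).
Proof.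
elim=> {u v}.
- by move=> w; reflexivity.
- by move=> u v _ h; symmetry.
- by move=> u v w _ h1 _ h2; rewrite h1.
- by move=> u u' v v' _ h1 _ h2; rewrite !winv_cat h1 h2; reflexivity.
- by move=> w; rewrite !winv_cat winvK -catA; have := F1 (winv w); rewrite winvK.
- move=> u v; rewrite !winv_cat !winvK -!catA; exact: comm.
- move=> k c /=.
  have He : idem [:: (Gen k.+1 c, false)] by apply: Meq_idem.
  have Hi := idem_selfinv He.
  change (Meq (winv [:: (Gen k.+1 c, false)] ++ winv [:: (Gen k.+1 c, false)])
              (winv [:: (Gen k.+1 c, false)])).
  rewrite Hi; exact: He.
- move=> k c.
  have He : idem [:: (Gen k.+1 c, false)] by apply: Meq_idem.
  have := absorb_inv He (Meq_bl c).
  by rewrite -winv_cat.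
Qed.

#[local] Instance winv_Proper : Proper (@Meq B ==> @Meq B) (@winv B).
Proof. by move=> u v h; apply: Meq_winv. Qed.

Lemma idem_uu (u : W) : idem (u ++ winv u).
Proof. rewrite /idem -catA (catA (winv u) u (winv u)) catA F1; reflexivity. Qed.

Lemma idem_uu' (u : W) : idem (winv u ++ u).
Proof. have := idem_uu (winv u); by rewrite winvK. Qed.

Lemma idem_eq (e : W) : idem e -> Meq e (e ++ winv e).
Proof. by move=> He; rewrite (idem_selfinv He) He; reflexivity. Qed.

Lemma idem_comm (e f : W) : idem e -> idem f -> Meq (e ++ f) (f ++ e).
Proof.
move=> He Hf; rewrite {1}(idem_eq He) {1}(idem_eq Hf).
rewrite -catA comm -(idem_eq He) catA -(idem_eq Hf); reflexivity.
Qed.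

Lemma idem_cat (e f : W) : idem e -> idem f -> idem (e ++ f).
Proof.
move=> He Hf; rewrite /idem -catA (catA f e f) -(idem_comm He Hf) -catA Hf catA He.
reflexivity.
Qed.

Lemma idem_nil : idem [::].
Proof. rewrite /idem /=; reflexivity. Qed.

Lemma idem_conj (x f : W) : idem f -> idem (x ++ f ++ winv x).
Proof.
move=> Hf; rewrite /idem.
have Hx := idem_uu' x.
have h : Meq (f ++ winv x ++ x) (winv x ++ x ++ f).
  by rewrite (idem_comm Hf Hx) -catA; reflexivity.
rewrite -!catA (catA (winv x) x) (catA f) h -!catA (catA f f) Hf.
rewrite (catA (winv x) x) (catA x) F1.
reflexivity.
Qed.

Lemma le_refl (u : W) : leM u u.
Proof. exists [::]; split; [exact: idem_nil | reflexivity]. Qed.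

Lemma le_Meq (u u' v v' : W) : Meq u u' -> Meq v v' -> leM u v -> leM u' v'.
Proof.
move=> h1 h2 [e [He h]]; exists e; split=> //.
by rewrite -h1 -h2.
Qed.

Lemma le_trans (u v w : W) : leM u v -> leM v w -> leM u w.
Proof.
move=> [e [He h1]] [f [Hf h2]]; exists (e ++ f); split; first exact: idem_cat.
by rewrite h1 h2 catA; reflexivity.
Qed.

Lemma le_cat (a b c d : W) : leM a b -> leM c d -> leM (a ++ c) (b ++ d).
Proof.
move=> [e [He h1]] [f [Hf h2]]; exists (e ++ (b ++ f ++ winv b)); split.
  by apply: idem_cat => //; apply: idem_conj.
rewrite h1 h2.
have h : Meq (b ++ f) ((b ++ f ++ winv b) ++ b).
  rewrite -!catA (idem_comm Hf (idem_uu' b)) catA F1; reflexivity.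
by rewrite -!catA (catA b f) h -!catA; reflexivity.
Qed.

Lemma le_inv (a b : W) : leM a b -> leM (winv a) (winv b).
Proof.
move=> [e [He h1]]; exists (winv b ++ e ++ b); split.
  by have := idem_conj (winv b) He; rewrite winvK.
rewrite h1 winv_cat (idem_selfinv He).
have h := idem_comm He (idem_uu b).
rewrite -{1}(F1 (winv b)) winvK -!catA (catA b (winv b) e) -h; reflexivity.
Qed.

Lemma idem_le_nil (f : W) : idem f -> leM f [::].
Proof. by move=> Hf; exists f; split => //; rewrite cats0; reflexivity. Qed.

Lemma le_remove (x f y : W) : idem f -> leM (x ++ f ++ y) (x ++ y).
Proof.
move=> Hf; apply: le_cat; first exact: le_refl.
rewrite -[y in leM _ y]/([::] ++ y); apply: le_cat; [exact: idem_le_nil | exact: le_refl].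
Qed.

Lemma le_idem_mul (r s t : W) : idem r -> leM r s -> leM r t -> leM r (s ++ t).
Proof.
move=> Hr h1 h2; apply: (@le_Meq (r ++ r) _ (s ++ t)) => //; last exact: le_cat.
reflexivity.
Qed.

Lemma le_idem_l (u v : W) : idem u -> idem v -> leM (u ++ v) u.
Proof. by move=> Hu Hv; exists v; split => //; apply: idem_comm. Qed.

Lemma le_idem_r (u v : W) : idem u -> idem v -> leM (u ++ v) v.
Proof. by move=> Hu Hv; exists u; split => //; reflexivity. Qed.

Lemma le_ww (r w : W) : idem r -> leM r w -> leM r (w ++ winv w).
Proof.
move=> Hr h; apply: (@le_Meq (r ++ winv r) _ (w ++ winv w)).
- by rewrite idem_selfinv //.
- reflexivity.
- by apply: le_cat => //; apply: le_inv.
Qed.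

Lemma le_ww' (r w : W) : idem r -> leM r w -> leM r (winv w ++ w).
Proof.
move=> Hr h; apply: (@le_Meq (winv r ++ r) _ (winv w ++ w)).
- by rewrite idem_selfinv //.
- reflexivity.
- by apply: le_cat => //; apply: le_inv.
Qed.

Definition rho m (s : cell B m.+2) : W := [:: (Gen m.+1 s, false)].
Definition Ew m (s : cell B m.+2) a b : W := [:: (Gen 0 (edge s a b), false)].
Definition Gw m (s : cell B m.+2) v : W := if v is 0 then [::] else Ew s 0 v.
Definition Tri m (s : cell B m.+2) a b : W := Gw s a ++ Ew s a b ++ winv (Gw s b).

Lemma rho_idem m (s : cell B m.+2) : idem (rho s).
Proof. exact: Meq_idem. Qed.

Lemma rho_bl m (s : cell B m.+2) : leM (rho s) (bl s).
Proof. exists (rho s); split; [exact: rho_idem | exact: Meq_bl]. Qed.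

Lemma map_le (g : nat -> gen B) (Hg : forall j, idem [:: (g j, false)]) (l : seq nat) (rest : W) :
  idem rest -> idem ([seq (g j, false) | j <- l] ++ rest) /\ (forall j, j \in l -> leM ([seq (g j, false) | j <- l] ++ rest) [:: (g j, false)]).
Proof.
move=> Hr; elim: l => [|x l [IH1 IH2]] /=; first by split.
have -> : (g x, false) :: [seq (g j, false) | j <- l] ++ rest =
   [:: (g x, false)] ++ ([seq (g j, false) | j <- l] ++ rest) by [].
split; first exact: idem_cat.
move=> j; rewrite in_cons => /orP [/eqP -> | hj].
  exact: le_idem_l.
apply: le_trans (IH2 _ hj); exact: le_idem_r.
Qed.

Lemma tri m : forall (s : cell B m.+2) a b, a < b -> b <= m.+2 -> leM (rho s) (Tri s a b).
Proof.
elim: m => [|m IH] s a b hab hb.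
  have H := rho_bl s.
  have [[-> ->]|[[-> ->]|[-> ->]]] : (a = 0 /\ b = 1) \/ (a = 0 /\ b = 2) \/ (a = 1 /\ b = 2) by lia.
  - apply: le_trans (le_ww (rho_idem s) H) _.
    pose y : W := [:: (Gen 0 (edge s 1 2), false); (Gen 0 (edge s 0 2), true)].
    have := le_remove [:: (Gen 0 (edge s 0 1), false)] [:: (Gen 0 (edge s 0 1), true)] (idem_uu y).
    by [].
  - apply: le_trans (le_ww' (rho_idem s) H) _.
    pose y : W := [:: (Gen 0 (edge s 0 1), false); (Gen 0 (edge s 1 2), false)].
    have := le_remove [:: (Gen 0 (edge s 0 2), false)] [:: (Gen 0 (edge s 0 2), true)] (idem_uu' y).
    by [].
  - exact: H.
pose i := if (a != 1) && (b != 1) then 1 else if (a != 2) && (b != 2) then 2 else 3.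
have hi1 : 1 <= i <= m.+3 by rewrite /i; case: ifP => _; [|case: ifP => _]; lia.
have hia : i != a by rewrite /i; case: ifP => h; [|case: ifP => h']; lia.
have hib : i != b by rewrite /i; case: ifP => h; [|case: ifP => h']; lia.
have Hface : leM (rho s) (rho (face B m.+2 i s)).
  apply: le_trans (rho_bl s) _.
  rewrite /bl.
  have Hr : idem ([:: (Gen 0 (edge s 0 1), false)] ++ [:: (Gen m.+1 (face B m.+2 0 s), false)]
                  ++ winv [:: (Gen 0 (edge s 0 1), false)]).
    by apply: idem_conj; exact: Meq_idem.
  have [_ H2] := @map_le (fun j => Gen m.+1 (face B m.+2 j s)) (fun j => Meq_idem _) (rev (iota 1 m.+3)) _ Hr.
  apply: H2; rewrite mem_rev mem_iota; lia.
apply: le_trans Hface _.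
have := IH (face B m.+2 i s) (unbump i a) (unbump i b).
have -> : Tri (face B m.+2 i s) (unbump i a) (unbump i b) = Tri s a b.
  rewrite /Tri /Ew /Gw.
  have hi' : i <= m.+3 by lia.
  have hi0 : i != 0 by lia.
  rewrite -(EF s hab hb hi' hia hib).
  have hG : forall v, v != i -> v <= m.+3 ->
     (if unbump i v is 0 then [::] else [:: (Gen 0 (edge (face B m.+2 i s) 0 (unbump i v)), false)] : W)
     = if v is 0 then [::] else [:: (Gen 0 (edge s 0 v), false)].
    move=> [|v] hv hvm; first by rewrite unbumpE ltn0.
    have [w hw] : exists w, unbump i v.+1 = w.+1 by exists (unbump i v.+1).-1; arith.
    have hv' : i != v.+1 by rewrite eq_sym.
    have := EF s (ltn0Sn v) hvm hi' hi0 hv'; rewrite [unbump i 0]unbumpE ltn0 => ->.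
    by rewrite hw.
  rewrite hG ?hG //; lia.
apply; arith.
Qed.

Definition stepB m (s : cell B m.+2) a b : W :=
  if a < b then [:: (Gen 0 (edge s a b), false)] else [:: (Gen 0 (edge s b a), true)].

Lemma path_le m (s : cell B m.+2) : forall q x, x <= m.+2 ->
  path (fun a b => (a != b) && (b <= m.+2)) x q ->
  leM (rho s) (Gw s x ++ flatten (pairmap (stepB s) x q) ++ winv (Gw s (last x q))).
Proof.
elim=> [|z q IH] x hx /=.
  move=> _; case: x hx => [|x] hx /=; first exact: idem_le_nil (rho_idem s).
  exact: (tri s (ltn0Sn x) hx).
move=> /andP [/andP [hxz hz] hp].
have h1 : leM (rho s) (Gw s x ++ stepB s x z ++ winv (Gw s z)).
  rewrite /stepB; case: ltngtP => h; last by move: hxz; rewrite h eqxx.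
  - exact: tri.
  - have := le_inv (tri s h hx); rewrite /Tri !winv_cat winvK -catA => H.
    apply: le_Meq H; [exact: idem_selfinv (rho_idem s) | reflexivity].
have h2 := IH z hz hp.
have := le_idem_mul (rho_idem s) h1 h2.
move/le_trans; apply.
have := @le_remove (Gw s x ++ stepB s x z) _
  (flatten (pairmap (stepB s) z q) ++ winv (Gw s (last z q))) (idem_uu' (Gw s z)).
by rewrite -!catA.
Qed.
End Alg.

Lemma eq_pairmap_ext (T U : Type) (g h : T -> T -> U) x (s : seq T) :
  (forall a b, g a b = h a b) -> pairmap g x s = pairmap h x s.
Proof. by move=> e; elim: s x => [|y s IH] x //=; rewrite e IH. Qed.

Theorem mainTheorem6
  (B : ssset) (n : nat)
  (HB0 : exists b : cell B 0, forall x : cell B 0, x = b)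
  (HBn : forall k : nat, n < k -> cell B k -> False)
  (C : ssset) (f : ssmap C B) (Himm : immersion f)
  (k : nat) (c : cell C k.+2) (q : seq nat)
  (Hq : closed_path k.+2 q) :
  leM (cell_word f c) (path_word f c q).
Proof.
move: Hq; rewrite /closed_path => /andP [hp /eqP hl].
have H := path_le (smap f c) (leq0n _) hp.
rewrite hl /= cats0 in H.
rewrite /path_word (eq_pairmap_ext _ _ (g := step_word f c) (h := stepB (smap f c))).
  exact: H.
by move=> a b; rewrite /step_word /stepB !smap_edge.
Qed.
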